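(* Consider the simplified community network described below with $\gamma>1$. Its equilibrium points (points $\beta=(\beta_a,\beta_b)\in[0,1]^2$ with $F(\beta)=\beta$) are $\mathbf 0=(0,0)$, $\mathbf 1=(1,1)$, and, when $\max\{p_1/p_2,\,p_2/p_1\}<\gamma$, the interior point $\beta^*=(\beta_a^*,\beta_b^* )$ with $$\beta_a^*=\frac{\gamma\big((\gamma+1)p_1p_2-2p_2+\sqrt{p_1p_2}\,\Delta\big)}{(\gamma-1)\big((\gamma+1)p_1p_2+\sqrt{p_1p_2}\,\Delta\big)},\qquad \beta_b^*=\frac{2\gamma p_1-(\gamma+1)p_1p_2-\sqrt{p_1p_2}\,\Delta}{(\gamma-1)\big((\gamma+1)p_1p_2+\sqrt{p_1p_2}\,\Delta\big)},$$ where $\Delta=\sqrt{4\gamma(1-p_1-p_2)+(\gamma+1)^2p_1p_2}$.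
   Context: The simplified community network has two agents $a,b$ with normalized adjacency (transition) matrix $W=\begin{pmatrix}p_1&1-p_1\\1-p_2&p_2\end{pmatrix}$, $p_1,p_2\in[0,1)$ not both zero; equivalently the symmetric weights are $a_{a,a}=p_1(1-p_2)$, $a_{a,b}=a_{b,a}=(1-p_1)(1-p_2)$, $a_{b,b}=p_2(1-p_1)$. Agent $a$ has bias parameter $\gamma_a=\gamma>1$ and agent $b$ has bias parameter $\gamma_b=1/\gamma$. With $f(\mu,\gamma)=\frac{\gamma\mu}{1+(\gamma-1)\mu}$, $\mu_a=p_1\beta_a+(1-p_1)\beta_b$, $\mu_b=(1-p_2)\beta_a+p_2\beta_b$, the map $F$ is $F(\beta_a,\beta_b)=(f(\mu_a,\gamma),f(\mu_b,1/\gamma))$. The condition $\max\{p_1/p_2,p_2/p_1\}<\gamma$ is understood to fail if $p_1=0$ or $p_2=0$. *)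

(* Defs.v *)
From Stdlib Require Import Reals.
Open Scope R_scope.

Definition f (mu gamma : R) : R := gamma * mu / (1 + (gamma - 1) * mu).

(* The map F of the simplified two-agent community network:
   agent a has bias gamma, agent b has bias 1/gamma. *)
Definition F (p1 p2 gamma : R) (beta : R * R) : R * R :=
  let mu_a := p1 * fst beta + (1 - p1) * snd beta in
  let mu_b := (1 - p2) * fst beta + p2 * snd beta in
  (f mu_a gamma, f mu_b (/ gamma)).

Definition Delta (p1 p2 gamma : R) : R :=
  sqrt (4 * gamma * (1 - p1 - p2) + (gamma + 1) ^ 2 * p1 * p2).

Definition beta_star_a (p1 p2 gamma : R) : R :=
  gamma * ((gamma + 1) * p1 * p2 - 2 * p2 + sqrt (p1 * p2) * Delta p1 p2 gamma)
  / ((gamma - 1) * ((gamma + 1) * p1 * p2 + sqrt (p1 * p2) * Delta p1 p2 gamma)).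

Definition beta_star_b (p1 p2 gamma : R) : R :=
  (2 * gamma * p1 - (gamma + 1) * p1 * p2 - sqrt (p1 * p2) * Delta p1 p2 gamma)
  / ((gamma - 1) * ((gamma + 1) * p1 * p2 + sqrt (p1 * p2) * Delta p1 p2 gamma)).

(* max{p1/p2, p2/p1} < gamma, understood to fail if p1 = 0 or p2 = 0 *)
Definition interior_cond (p1 p2 gamma : R) : Prop :=
  0 < p1 /\ 0 < p2 /\ Rmax (p1 / p2) (p2 / p1) < gamma.

Definition in_unit_square (beta : R * R) : Prop :=
  0 <= fst beta <= 1 /\ 0 <= snd beta <= 1.

(* Main.v *)
Require Import Defs.
From Stdlib Require Import Reals.
Open Scope R_scope.
From Stdlib Require Import Lra Psatz.

Lemma f_eq_a (m x g : R) : 1 < g -> 0 <= m <= 1 ->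
  (Defs.f m g = x <-> m * (g - (g - 1) * x) = x).
Proof.
  intros Hg Hm. unfold Defs.f.
  assert (HD : 0 < 1 + (g - 1) * m) by nra.
  split; intro H.
  - rewrite <- H. field. lra.
  - assert (E : x = g * m / (1 + (g - 1) * m)).
    { apply (Rmult_eq_reg_r (1 + (g - 1) * m)); [| lra].
      field_simplify; [nra | lra]. }
    symmetry; exact E.
Qed.

Lemma f_eq_b (m y g : R) : 1 < g -> 0 <= m <= 1 ->
  (Defs.f m (/ g) = y <-> m * (1 + (g - 1) * y) = g * y).
Proof.
  intros Hg Hm. unfold Defs.f.
  assert (HD : 0 < g + (1 - g) * m) by nra.
  assert (E0 : / g * m / (1 + (/ g - 1) * m) = m / (g + (1 - g) * m)).
  { field. split; [|lra]. intro Hc.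
    assert (Hc2 : g * (1 + (/ g - 1) * m) = g + (1-g)*m) by (field; lra). nra. }
  rewrite E0.
  split; intro H.
  - rewrite <- H. field. lra.
  - assert (E : y = m / (g + (1 - g) * m)).
    { apply (Rmult_eq_reg_r (g + (1 - g) * m)); [| lra].
      field_simplify; [nra | lra]. }
    symmetry; exact E.
Qed.

Lemma lt_of_sq (T r : R) : 0 <= T -> r * r < T * T -> r < T.
Proof. intros; nra. Qed.

Lemma uniq_root (c B C z1 z2 l h : R) :
  l <= z1 <= h -> l <= z2 <= h ->
  c * z1 * z1 - B * z1 + C = 0 -> c * z2 * z2 - B * z2 + C = 0 ->
  0 < c * l * l - B * l + C -> c * h * h - B * h + C < 0 -> z1 = z2.
Proof.
  intros H1 H2 E1 E2 Ql Qh.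
  destruct (Req_dec z1 z2) as [|Hne]; [assumption|exfalso].
  assert (HB : c * (z1 + z2) = B).
  { apply (Rmult_eq_reg_r (z1 - z2)); [|lra]. nra. }
  assert (HC : C = c * z1 * z2) by nra.
  assert (Fl : c * l * l - B * l + C = c * ((l - z1) * (l - z2))) by (rewrite <- HB, HC; ring).
  assert (Fh : c * h * h - B * h + C = c * ((h - z1) * (h - z2))) by (rewrite <- HB, HC; ring).
  rewrite Fl in Ql. rewrite Fh in Qh.
  assert (A1 : (l - z1) * (h - z1) <= 0) by nra.
  assert (A2 : (l - z2) * (h - z2) <= 0) by nra.
  assert (P1 : 0 <= ((l - z1) * (h - z1)) * ((l - z2) * (h - z2))) by nra.
  assert (P2 : c * ((l - z1) * (l - z2)) * (c * ((h - z1) * (h - z2))) < 0).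
  { assert (0 < c * ((l - z1) * (l - z2))) by lra. nra. }
  assert (P3 : c * ((l - z1) * (l - z2)) * (c * ((h - z1) * (h - z2))) = (c*c) * (((l - z1) * (h - z1)) * ((l - z2) * (h - z2)))) by ring.
  rewrite P3 in P2. nra.
Qed.

Lemma lt_of_sq2 (T r : R) : 0 <= T -> 0 < r -> T * T < r * r -> T < r.
Proof. intros; nra. Qed.

Lemma interior_facts (p1 p2 g : R) :
  0 < p1 < 1 -> 0 < p2 < 1 -> 1 < g -> p1 < g * p2 -> p2 < g * p1 ->
  let K := (g + 1) * p1 * p2 + sqrt (p1 * p2) * Defs.Delta p1 p2 g in
  2 * p2 < K /\ K < 2 * g * p2 /\ 2 * p1 < K /\ K < 2 * g * p1 /\
  K * K - 2 * (g + 1) * (p1 * p2) * K + 4 * g * (p1 * p2) * (p1 + p2 - 1) = 0.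
Proof.
  intros H1 H2 Hg Ha Hb K.
  set (arg := 4 * g * (1 - p1 - p2) + (g + 1) ^ 2 * p1 * p2).
  set (P := p1 * p2).
  assert (HP : 0 < P) by (unfold P; nra).
  assert (I1 : P * arg - (p2 * (2 - (g + 1) * p1)) * (p2 * (2 - (g + 1) * p1)) = 4 * p2 * (1 - p1) * (g * p1 - p2))
    by (unfold P, arg; ring).
  assert (I2 : (2 * g * p2 - (g + 1) * P) * (2 * g * p2 - (g + 1) * P) - P * arg = 4 * g * p2 * (1 - p1) * (g * p2 - p1))
    by (unfold P, arg; ring).
  assert (I3 : P * arg - (p1 * (2 - (g + 1) * p2)) * (p1 * (2 - (g + 1) * p2)) = 4 * p1 * (1 - p2) * (g * p2 - p1))
    by (unfold P, arg; ring).
  assert (I4 : (2 * g * p1 - (g + 1) * P) * (2 * g * p1 - (g + 1) * P) - P * arg = 4 * g * p1 * (1 - p2) * (g * p1 - p2))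
    by (unfold P, arg; ring).
  assert (J1 : 0 < 4 * p2 * (1 - p1) * (g * p1 - p2)).
  { apply Rmult_lt_0_compat; [|lra]. apply Rmult_lt_0_compat; lra. }
  assert (J2 : 0 < 4 * g * p2 * (1 - p1) * (g * p2 - p1)).
  { apply Rmult_lt_0_compat; [|lra]. apply Rmult_lt_0_compat; [|lra]. apply Rmult_lt_0_compat; lra. }
  assert (J3 : 0 < 4 * p1 * (1 - p2) * (g * p2 - p1)).
  { apply Rmult_lt_0_compat; [|lra]. apply Rmult_lt_0_compat; lra. }
  assert (J4 : 0 < 4 * g * p1 * (1 - p2) * (g * p1 - p2)).
  { apply Rmult_lt_0_compat; [|lra]. apply Rmult_lt_0_compat; [|lra]. apply Rmult_lt_0_compat; lra. }
  assert (Harg : 0 < arg).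
  { assert (0 <= (p2 * (2 - (g + 1) * p1)) * (p2 * (2 - (g + 1) * p1))) by apply Rle_0_sqr.
    assert (0 < P * arg) by lra.
    destruct (Rlt_or_le 0 arg) as [|Hn]; [assumption|].
    assert (P * arg <= 0) by nra . lra. }
  set (T := sqrt (p1 * p2) * Defs.Delta p1 p2 g).
  assert (HT0 : 0 <= T) by (unfold T; apply Rmult_le_pos; [apply sqrt_pos | unfold Defs.Delta; apply sqrt_pos]).
  assert (HT2 : T * T = P * arg).
  { unfold T, Defs.Delta. fold arg. fold P.
    replace (sqrt P * sqrt arg * (sqrt P * sqrt arg)) with ((sqrt P * sqrt P) * (sqrt arg * sqrt arg)) by ring.
    rewrite !sqrt_sqrt; lra. }
  assert (HK : K = (g + 1) * P + T) by (unfold K, T, P; ring).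
  rewrite HK.
  assert (r1 : 0 < 2 * g * p2 - (g + 1) * P) by (unfold P; nra).
  assert (r2 : 0 < 2 * g * p1 - (g + 1) * P) by (unfold P; nra).
  split; [| split; [| split; [| split]]].
  - assert (p2 * (2 - (g + 1) * p1) < T) by (apply lt_of_sq; lra). unfold P in *. lra.
  - assert (T < 2 * g * p2 - (g + 1) * P) by (apply lt_of_sq2; lra). lra.
  - assert (p1 * (2 - (g + 1) * p2) < T) by (apply lt_of_sq; lra). unfold P in *. lra.
  - assert (T < 2 * g * p1 - (g + 1) * P) by (apply lt_of_sq2; lra). lra.
  - unfold arg in HT2. replace ((g+1)^2) with ((g+1)*(g+1)) in HT2 by ring.
    unfold P in *. nra.
Qed.

Lemma bsa_eq (p1 p2 g : R) :
  beta_star_a p1 p2 g = g * (((g + 1) * p1 * p2 + sqrt (p1 * p2) * Defs.Delta p1 p2 g) - 2 * p2)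
    / ((g - 1) * ((g + 1) * p1 * p2 + sqrt (p1 * p2) * Defs.Delta p1 p2 g)).
Proof. unfold beta_star_a. f_equal. ring. Qed.

Lemma bsb_eq (p1 p2 g : R) :
  beta_star_b p1 p2 g = (2 * g * p1 - ((g + 1) * p1 * p2 + sqrt (p1 * p2) * Defs.Delta p1 p2 g))
    / ((g - 1) * ((g + 1) * p1 * p2 + sqrt (p1 * p2) * Defs.Delta p1 p2 g)).
Proof. unfold beta_star_b. f_equal. ring. Qed.

Lemma star_alg (p1 p2 g K : R) : 1 < g -> 0 < K ->
  let x := g * (K - 2 * p2) / ((g - 1) * K) in
  let y := (2 * g * p1 - K) / ((g - 1) * K) in
  let Q := K * K - 2 * (g + 1) * (p1 * p2) * K + 4 * g * (p1 * p2) * (p1 + p2 - 1) in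
  (p1 * x + (1 - p1) * y) * (g - (g - 1) * x) - x = - (g * Q) / ((g - 1) * (K * K)) /\
  ((1 - p2) * x + p2 * y) * (1 + (g - 1) * y) - g * y = (g * Q) / ((g - 1) * (K * K)).
Proof.
  intros Hg HK x y Q. unfold x, y, Q. split; field; lra.
Qed.

Lemma div_lt_lemma (a b g : R) : 0 < b -> a < g * b -> a / b < g.
Proof. intros Hb H. assert (E : a / b * b = a) by (field; lra). nra. Qed.

Lemma star_facts (p1 p2 g : R) :
  0 < p1 < 1 -> 0 < p2 < 1 -> 1 < g -> p1 < g * p2 -> p2 < g * p1 ->
  (0 < beta_star_a p1 p2 g < 1 /\ 0 < beta_star_b p1 p2 g < 1) /\
  (p1 * beta_star_a p1 p2 g + (1 - p1) * beta_star_b p1 p2 g) * (g - (g - 1) * beta_star_a p1 p2 g)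
     = beta_star_a p1 p2 g /\
  ((1 - p2) * beta_star_a p1 p2 g + p2 * beta_star_b p1 p2 g) * (1 + (g - 1) * beta_star_b p1 p2 g)
     = g * beta_star_b p1 p2 g.
Proof.
  intros H1 H2 Hg Ha Hb.
  destruct (interior_facts p1 p2 g H1 H2 Hg Ha Hb) as (K1 & K2 & K3 & K4 & KQ).
  rewrite bsa_eq, bsb_eq.
  set (K := (g + 1) * p1 * p2 + sqrt (p1 * p2) * Defs.Delta p1 p2 g) in *.
  assert (HK : 0 < K) by lra.
  destruct (star_alg p1 p2 g K Hg HK) as [A1 A2].
  set (x := g * (K - 2 * p2) / ((g - 1) * K)) in *.
  set (y := (2 * g * p1 - K) / ((g - 1) * K)) in *.
  rewrite KQ in A1, A2.
  assert (D : 0 < (g - 1) * K) by (apply Rmult_lt_0_compat; lra).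
  split; [split; split|split].
  - unfold x. apply Rdiv_lt_0_compat; [apply Rmult_lt_0_compat|]; lra.
  - assert (E : 1 - x = (2 * g * p2 - K) / ((g - 1) * K)) by (unfold x; field; lra).
    assert (0 < (2 * g * p2 - K) / ((g - 1) * K)) by (apply Rdiv_lt_0_compat; lra). lra.
  - unfold y. apply Rdiv_lt_0_compat; lra.
  - assert (E : 1 - y = g * (K - 2 * p1) / ((g - 1) * K)) by (unfold y; field; lra).
    assert (0 < g * (K - 2 * p1) / ((g - 1) * K)) by (apply Rdiv_lt_0_compat; [apply Rmult_lt_0_compat|]; lra). lra.
  - assert (E : - (g * 0) / ((g - 1) * (K * K)) = 0) by (field; nra). lra.
  - assert (E : (g * 0) / ((g - 1) * (K * K)) = 0) by (field; nra). lra.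
Qed.

Theorem proposition4 (p1 p2 gamma : R)
  (hp1 : 0 <= p1 < 1) (hp2 : 0 <= p2 < 1) (hp : ~ (p1 = 0 /\ p2 = 0))
  (hgamma : 1 < gamma) :
  (interior_cond p1 p2 gamma ->
     0 < beta_star_a p1 p2 gamma < 1 /\ 0 < beta_star_b p1 p2 gamma < 1) /\
  (forall beta : R * R, in_unit_square beta ->
     (F p1 p2 gamma beta = beta <->
       (beta = (0, 0) \/ beta = (1, 1) \/
        (interior_cond p1 p2 gamma /\
         beta = (beta_star_a p1 p2 gamma, beta_star_b p1 p2 gamma))))).
Proof.
  assert (Hcond : interior_cond p1 p2 gamma ->
            0 < p1 /\ 0 < p2 /\ p1 < gamma * p2 /\ p2 < gamma * p1).
  { intros [H1 [H2 H3]]. split; [lra|split;[lra|]].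
    assert (p1/p2 < gamma) by (eapply Rle_lt_trans; [apply Rmax_l | exact H3]).
    assert (p2/p1 < gamma) by (eapply Rle_lt_trans; [apply Rmax_r | exact H3]).
    assert (p1/p2*p2 = p1) by (field; lra). assert (p2/p1*p1 = p2) by (field; lra).
    split; nra. }
  split.
  - intro Hc. destruct (Hcond Hc) as (c1 & c2 & c3 & c4).
    apply (star_facts p1 p2 gamma); lra.
  - intros [x y] [Hx Hy]. simpl in Hx, Hy.
    assert (Hma : 0 <= p1 * x + (1 - p1) * y <= 1) by nra.
    assert (Hmb : 0 <= (1 - p2) * x + p2 * y <= 1) by nra.
    assert (HF : F p1 p2 gamma (x, y) = (x, y) <->
       ((p1 * x + (1 - p1) * y) * (gamma - (gamma - 1) * x) = x /\
        ((1 - p2) * x + p2 * y) * (1 + (gamma - 1) * y) = gamma * y)).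
    { unfold F; simpl. split.
      - intro H. injection H as H1 H2.
        split; [apply (f_eq_a _ x gamma) | apply (f_eq_b _ y gamma)]; assumption.
      - intros [E1 E2]. f_equal; [apply (f_eq_a _ x gamma) | apply (f_eq_b _ y gamma)]; assumption. }
    rewrite HF. clear HF. split.
    + intros [E1 E2].
      assert (Es1 : (x - y) * (1 - p1 * (gamma - (gamma - 1) * x)) = (gamma - 1) * (1 - x) * y).
      { assert (I : (x - y) * (1 - p1 * (gamma - (gamma - 1) * x)) - (gamma - 1) * (1 - x) * y
                   = - ((p1 * x + (1 - p1) * y) * (gamma - (gamma - 1) * x) - x)) by ring.
        lra. }
      assert (Es2 : (x - y) * (1 - p2 * (1 + (gamma - 1) * y)) = (gamma - 1) * (1 - x) * y).
      { assert (I : (x - y) * (1 - p2 * (1 + (gamma - 1) * y)) - (gamma - 1) * (1 - x) * y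
                   = ((1 - p2) * x + p2 * y) * (1 + (gamma - 1) * y) - gamma * y) by ring.
        lra. }
      assert (Ed : (x - y) * (p1 * (gamma - (gamma - 1) * x) - p2 * (1 + (gamma - 1) * y)) = 0).
      { assert (I : (x - y) * (p1 * (gamma - (gamma - 1) * x) - p2 * (1 + (gamma - 1) * y))
           = (x - y) * (1 - p2 * (1 + (gamma - 1) * y)) - (x - y) * (1 - p1 * (gamma - (gamma - 1) * x))) by ring.
        lra. }
      destruct (Req_dec (x - y) 0) as [Hd | Hdn].
      * assert (Hxy : y = x) by lra. subst y.
        assert (E0 : (gamma - 1) * ((1 - x) * x) = 0).
        { assert (I : (gamma - 1) * ((1 - x) * x) = (gamma - 1) * (1 - x) * x) by ring. lra. }
        destruct (Rmult_integral _ _ E0) as [|E3]; [lra|].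
        destruct (Rmult_integral _ _ E3) as [E4|E4].
        -- right; left. f_equal; lra.
        -- left. f_equal; lra.
      * assert (Hab : p1 * (gamma - (gamma - 1) * x) - p2 * (1 + (gamma - 1) * y) = 0)
          by (destruct (Rmult_integral _ _ Ed); [contradiction | assumption]).
        set (a := gamma - (gamma - 1) * x) in *.
        set (b := 1 + (gamma - 1) * y) in *.
        assert (Ea : a = gamma - (gamma - 1) * x) by reflexivity.
        assert (Eb : b = 1 + (gamma - 1) * y) by reflexivity.
        clearbody a b.
        assert (Ha1 : 1 <= a <= gamma) by (rewrite Ea; nra).
        assert (Hb1 : 1 <= b <= gamma) by (rewrite Eb; nra).
        assert (Hpab : p1 * a = p2 * b) by lra.
        assert (Pp1 : 0 < p1).
        { destruct (Req_dec p1 0) as [E|E]; [|lra].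
          exfalso. rewrite E in Hpab. assert (p2 = 0) by nra. tauto. }
        assert (Pp2 : 0 < p2).
        { destruct (Req_dec p2 0) as [E|E]; [|lra].
          exfalso. rewrite E in Hpab. assert (p1 = 0) by nra. tauto. }
        assert (C4 : p2 < gamma * p1).
        { destruct (Rlt_or_le p2 (gamma * p1)) as [|Hle]; [assumption|exfalso].
          assert (S1 : 0 <= p2 * ((gamma - 1) * y)) by (apply Rmult_le_pos; [lra|apply Rmult_le_pos; lra]).
          assert (S2 : 0 <= p1 * ((gamma - 1) * x)) by (apply Rmult_le_pos; [lra|apply Rmult_le_pos; lra]).
          assert (I : p2 * ((gamma - 1) * y) + p1 * ((gamma - 1) * x) = gamma * p1 - p2).
          { assert (I0 : p2 * ((gamma - 1) * y) + p1 * ((gamma - 1) * x) = p2 * b - p2 + gamma * p1 - p1 * a) by (rewrite Ea, Eb; ring). lra. }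
          assert (Z1 : p2 * ((gamma - 1) * y) = 0) by lra.
          assert (Z2 : p1 * ((gamma - 1) * x) = 0) by lra.
          apply Hdn.
          assert (y = 0) by (destruct (Rmult_integral _ _ Z1) as [|Z]; [lra|destruct (Rmult_integral _ _ Z); lra]).
          assert (x = 0) by (destruct (Rmult_integral _ _ Z2) as [|Z]; [lra|destruct (Rmult_integral _ _ Z); lra]).
          lra. }
        assert (C3 : p1 < gamma * p2).
        { destruct (Rlt_or_le p1 (gamma * p2)) as [|Hle]; [assumption|exfalso].
          assert (S1 : 0 <= p1 * ((gamma - 1) * (1 - x))) by (apply Rmult_le_pos; [lra|apply Rmult_le_pos; lra]).
          assert (S2 : 0 <= p2 * ((gamma - 1) * (1 - y))) by (apply Rmult_le_pos; [lra|apply Rmult_le_pos; lra]).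
          assert (I : p1 * ((gamma - 1) * (1 - x)) + p2 * ((gamma - 1) * (1 - y)) = gamma * p2 - p1).
          { assert (I0 : p1 * ((gamma - 1) * (1 - x)) + p2 * ((gamma - 1) * (1 - y)) = p1 * a - p1 + gamma * p2 - p2 * b) by (rewrite Ea, Eb; ring). lra. }
          assert (Z1 : p1 * ((gamma - 1) * (1 - x)) = 0) by lra.
          assert (Z2 : p2 * ((gamma - 1) * (1 - y)) = 0) by lra.
          apply Hdn.
          assert (x = 1) by (destruct (Rmult_integral _ _ Z1) as [|Z]; [lra|destruct (Rmult_integral _ _ Z); lra]).
          assert (y = 1) by (destruct (Rmult_integral _ _ Z2) as [|Z]; [lra|destruct (Rmult_integral _ _ Z); lra]).
          lra. }
        assert (Hc : interior_cond p1 p2 gamma).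
        { unfold interior_cond. split; [lra|split;[lra|]].
          apply Rmax_lub_lt; apply div_lt_lemma; lra. }
        right; right; split; [exact Hc|].
        set (z := a / p2).
        assert (ha : a = p2 * z) by (unfold z; field; lra).
        assert (hb : b = p1 * z).
        { assert (I : p2 * (p1 * z) = p1 * a) by (unfold z; field; lra).
          apply (Rmult_eq_reg_l p2); lra. }
        clearbody z.
        assert (hx : x = (gamma - p2 * z) / (gamma - 1)) by (rewrite <- ha, Ea; field; lra).
        assert (hy : y = (p1 * z - 1) / (gamma - 1)) by (rewrite <- hb, Eb; field; lra).
        set (c := p1 * p2 * (p1 + p2 - 1)).
        set (B := (gamma + 1) * (p1 * p2)).
        assert (Qz : c * z * z - B * z + gamma = 0).
        { rewrite ha in Es1.
          assert (I : c * z * z - B * z + gamma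
             = (gamma - 1) * ((x - y) * (1 - p1 * (p2 * z)) - (gamma - 1) * (1 - x) * y))
            by (unfold c, B; rewrite hx, hy; field; lra).
          rewrite I, Es1. ring. }
        destruct (interior_facts p1 p2 gamma ltac:(lra) ltac:(lra) hgamma C3 C4) as (K1 & K2 & K3 & K4 & KQ).
        set (K := (gamma + 1) * p1 * p2 + sqrt (p1 * p2) * Defs.Delta p1 p2 gamma) in *.
        set (zs := 2 * gamma / K).
        assert (Qzs : c * zs * zs - B * zs + gamma = 0).
        { assert (I : c * zs * zs - B * zs + gamma =
             gamma * (K * K - 2 * (gamma + 1) * (p1 * p2) * K + 4 * gamma * (p1 * p2) * (p1 + p2 - 1)) / (K * K))
            by (unfold zs, c, B; field; lra).
          rewrite I, KQ. field. lra. }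
        assert (Ql : 0 < c * (1 / p2) * (1 / p2) - B * (1 / p2) + gamma).
        { assert (I : c * (1 / p2) * (1 / p2) - B * (1 / p2) + gamma = (1 - p1) * (gamma * p2 - p1) / p2)
            by (unfold c, B; field; lra).
          rewrite I. apply Rdiv_lt_0_compat; [apply Rmult_lt_0_compat|]; lra. }
        assert (Qh : c * (gamma / p2) * (gamma / p2) - B * (gamma / p2) + gamma < 0).
        { assert (I : c * (gamma / p2) * (gamma / p2) - B * (gamma / p2) + gamma
                      = - (gamma * (1 - p1) * (gamma * p1 - p2) / p2))
            by (unfold c, B; field; lra).
          rewrite I. assert (0 < gamma * (1 - p1) * (gamma * p1 - p2) / p2); [|lra].
          apply Rdiv_lt_0_compat; [apply Rmult_lt_0_compat; [apply Rmult_lt_0_compat|]|]; lra. }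
        assert (Hip : 0 < / p2) by (apply Rinv_0_lt_compat; lra).
        assert (Bz : 1 / p2 <= z <= gamma / p2).
        { assert (I1 : z - 1 / p2 = (p2 * z - 1) * / p2) by (field; lra).
          assert (I2 : gamma / p2 - z = (gamma - p2 * z) * / p2) by (field; lra).
          assert (0 <= (p2 * z - 1) * / p2) by (apply Rmult_le_pos; lra).
          assert (0 <= (gamma - p2 * z) * / p2) by (apply Rmult_le_pos; lra).
          lra. }
        assert (HK : 0 < K) by lra.
        assert (Hik : 0 < / (p2 * K)) by (apply Rinv_0_lt_compat; apply Rmult_lt_0_compat; lra).
        assert (Bzs : 1 / p2 <= zs <= gamma / p2).
        { assert (I1 : zs - 1 / p2 = (2 * gamma * p2 - K) * / (p2 * K)) by (unfold zs; field; lra).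
          assert (I2 : gamma / p2 - zs = gamma * (K - 2 * p2) * / (p2 * K)) by (unfold zs; field; lra).
          assert (0 <= (2 * gamma * p2 - K) * / (p2 * K)) by (apply Rmult_le_pos; lra).
          assert (0 <= gamma * (K - 2 * p2) * / (p2 * K)) by (apply Rmult_le_pos; [apply Rmult_le_pos|]; lra).
          lra. }
        assert (Hz : z = zs) by (apply (uniq_root c B gamma z zs (1 / p2) (gamma / p2)); assumption).
        rewrite bsa_eq, bsb_eq. fold K.
        f_equal.
        -- rewrite hx, Hz. unfold zs. field. lra.
        -- rewrite hy, Hz. unfold zs. field. lra.
    + intros [H | [H | [Hc H]]]; injection H as -> ->.
      * split; ring.
      * split; ring.
      * destruct (Hcond Hc) as (c1 & c2 & c3 & c4).
        destruct (star_facts p1 p2 gamma) as [_ [G1 G2]]; try lra; split; assumption.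
Qed.
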